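(* Let $d\ge1$ and let $G_1=(V_1,E_1)$ and $G_2=(V_2,E_2)$ be two graphs with $G_1\cap G_2\cong K_2$ and $E_1\cap E_2=\{e\}$, such that $e$ is not a coloop in either $\mathcal{R}_d(G_1)$ or $\mathcal{R}_d(G_2)$. If $G$ is the graphical parallel connection of $G_1$ and $G_2$ along $e$, then $\mathcal{R}_d(G)=P(\mathcal{R}_d(G_1),\mathcal{R}_d(G_2))$. Moreover, if $G'$ is the graphical 2-sum of $G_1$ and $G_2$ along $e$, then $\mathcal{R}_d(G')=\mathcal{R}_d(G_1)\oplus_2\mathcal{R}_d(G_2)$.
   Context: For a graph $G=(V,E)$ and a generic $p:V\to\mathbb{R}^d$ (coordinates algebraically independent over $\mathbb{Q}$), the rigidity matrix $R(G,p)$ has a row for each $uv\in E$ with $p(u)-p(v)$ in the $d$ columns of $u$, $p(v)-p(u)$ in those of $v$, zeros elsewhere. $\mathcal{R}_d(G)$ is its row matroid on $E$. A coloop of a matroid is an element contained in no circuit. Graphical operations: for graphs $G_1,G_2$ with $G_1\cap G_2\cong K_2$ and $E_1\cap E_2=\{e\}$, the graphical parallel connection along $e$ is $G_1\cup G_2$ and the graphical 2-sum along $e$ is $(G_1\cup G_2)-e$. Matroid operations: for matroids $\mathcal{M}_1,\mathcal{M}_2$ on $E_1,E_2$ with $E_1\cap E_2=\{e\}$, $e$ neither a loop nor a coloop of either, the parallel connection $P(\mathcal{M}_1,\mathcal{M}_2)$ is the matroid on $E_1\cup E_2$ whose circuits are the circuits of $\mathcal{M}_1$, the circuits of $\mathcal{M}_2$,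 and the sets $(C_1\cup C_2)-e$ where $C_i$ is a circuit of $\mathcal{M}_i$ containing $e$ for $i=1,2$. The 2-sum $\mathcal{M}_1\oplus_2\mathcal{M}_2$ is the matroid on $(E_1\cup E_2)-e$ whose circuits are the circuits of $\mathcal{M}_1$ or $\mathcal{M}_2$ not containing $e$, together with the sets $(C_1\cup C_2)-e$ where $C_i$ is a circuit of $\mathcal{M}_i$ containing $e$ for $i=1,2$. *)

(* Defs.v *)
From HB Require Import structures.
From mathcomp Require Import all_boot all_order all_algebra.
From mathcomp Require Import reals.
From mathcomp Require Import mpoly.

Set Implicit Arguments.
Unset Strict Implicit.
Unset Printing Implicit Defensive.

Import Order.TTheory GRing.Theory Num.Theory.
Local Open Scope ring_scope.

Definition is_graph (T : finType) (V : {set T}) (E : {set {set T}}) : Prop :=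
  forall f, f \in E -> (f \subset V) /\ #|f| = 2%N.

(* p : T -> R^d (coordinates p w k) is generic on V: any finite family of
   pairwise distinct coordinates of vertices of V is algebraically
   independent over Q. *)
Definition generic_on (R : realType) (T : finType) (d : nat) (V : {set T})
    (p : T -> 'I_d -> R) : Prop :=
  forall (n : nat) (c : 'I_n -> T * 'I_d),
    injective c -> (forall k, (c k).1 \in V) ->
    forall q : {mpoly rat[n]}, q != 0 ->
      (map_mpoly (ratr : rat -> R) q).@[fun k => p (c k).1 (c k).2] != 0.

(* Row of the rigidity matrix R(G,p) for the edge f = {u,v}, entry in the
   column (w,k): p(u)_k - p(v)_k if w = u, p(v)_k - p(u)_k if w = v, 0 else. *)
Definition rig_row (R : realType) (T : finType) (d : nat) (p : T -> 'I_d -> R)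
    (f : {set T}) (w : T) (k : 'I_d) : R :=
  if w \in f then \sum_(x in f) (p w k - p x k) else 0.

Definition rig_dependent (R : realType) (T : finType) (d : nat)
    (p : T -> 'I_d -> R) (F : {set {set T}}) : Prop :=
  exists c : {set T} -> R,
    (exists2 f, f \in F & c f != 0) /\
    forall w k, \sum_(f in F) c f * rig_row p f w k = 0.

Definition rig_circuit (R : realType) (T : finType) (d : nat)
    (p : T -> 'I_d -> R) (E : {set {set T}}) (C : {set {set T}}) : Prop :=
  C \subset E /\ rig_dependent p C /\
  forall C' : {set {set T}}, C' \proper C -> ~ rig_dependent p C'.

Definition is_coloop (A : finType) (M : {set A} -> Prop) (e : A) : Prop :=
  ~ exists2 C, M C & e \in C.

Definition parallel_connection_circuits (A : finType)
    (M1 M2 : {set A} -> Prop) (e : A) (C : {set A}) : Prop :=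
  M1 C \/ M2 C \/
  exists C1 C2, [/\ M1 C1, e \in C1, M2 C2, e \in C2 & C = (C1 :|: C2) :\ e].

Definition two_sum_circuits (A : finType)
    (M1 M2 : {set A} -> Prop) (e : A) (C : {set A}) : Prop :=
  ((M1 C \/ M2 C) /\ e \notin C) \/
  exists C1 C2, [/\ M1 C1, e \in C1, M2 C2, e \in C2 & C = (C1 :|: C2) :\ e].

(* Main.v *)
Require Import Defs.
From HB Require Import structures.
From mathcomp Require Import all_boot all_order all_algebra.
From mathcomp Require Import reals.
From mathcomp Require Import mpoly ring.
From Stdlib Require Import PropExtensionality FunctionalExtensionality.
Import Order.TTheory GRing.Theory Num.Theory.
Set Implicit Arguments.
Unset Strict Implicit.
Unset Printing Implicit Defensive.
Local Open Scope ring_scope.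

Section Abstract.
Variables (R : fieldType) (A : finType) (X : Type) (r : A -> X -> R).

Definition lin (c : A -> R) x := \sum_(f : A) c f * r f x.
Definition depc (F : {set A}) (c : A -> R) :=
  (forall f, f \notin F -> c f = 0) /\ (forall x, lin c x = 0).
Definition dep (F : {set A}) := exists c, depc F c /\ exists f, c f != 0.
Definition mdep (C : {set A}) := dep C /\ forall C' : {set A}, C' \proper C -> ~ dep C'.
Definition circ (E C : {set A}) := C \subset E /\ mdep C.

Lemma lin_ext c c' x : (forall f, c f = c' f) -> lin c x = lin c' x.
Proof. by move=> h; apply: eq_bigr => f _; rewrite h. Qed.

Lemma linE (a b : R) c1 c2 x :
  lin (fun f => a * c1 f + b * c2 f) x = a * lin c1 x + b * lin c2 x.
Proof.
rewrite /lin !mulr_sumr -big_split /=; apply: eq_bigr => f _; ring.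
Qed.

Lemma lin_delta (e : A) (l : R) x :
  lin (fun f => if f == e then l else 0) x = l * r e x.
Proof.
rewrite /lin (bigD1 e) //= eqxx big1 ?addr0 // => f /negbTE ->; by rewrite mul0r.
Qed.

Lemma dep_sub (D D' : {set A}) : D \subset D' -> dep D -> dep D'.
Proof.
move=> sDD' [c [[s l] nt]]; exists c; split=> //; split=> // f fD'.
apply: s; apply/negP => fD; by rewrite (subsetP sDD' f fD) in fD'.
Qed.

Lemma full (C : {set A}) c : mdep C -> depc C c ->
  (forall f, c f = 0) \/ (forall f, f \in C -> c f != 0).
Proof.
move=> [_ mC] [s l].
case: (boolP [exists f, c f != 0]) => [/existsP [f0 nf0]|].
  right=> f fC; apply/negP => /eqP cf.
  apply: (mC (C :\ f)); first exact: properD1.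
  exists c; split; last by exists f0.
  split=> // g; rewrite !inE negb_and negbK; case/orP => [/eqP -> //|]; exact: s.
rewrite negb_exists => /forallP h; left=> f; exact/eqP/negbNE/h.
Qed.

Lemma elimA (Xs D : {set A}) g x :
  depc Xs g -> (forall f, f \in Xs -> g f != 0) -> D \proper Xs -> dep D ->
  x \in Xs -> dep (Xs :\ x).
Proof.
move=> [sg lg] fg pD [d [[sd ld] [f0 nf0]]] xX.
have sDX := proper_sub pD.
have dX : forall f, f \notin Xs -> d f = 0.
  move=> f fX; apply: sd; apply/negP => fD; by rewrite (subsetP sDX f fD) in fX.
have [dx0|dxn] := eqVneq (d x) 0.
  exists d; split; last by exists f0.
  split=> // f; rewrite !inE negb_and negbK; case/orP => [/eqP -> //|]; exact: dX.
pose h := fun f => 1 * g f + (- (g x / d x)) * d f.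
exists h; split.
  split; last by move=> y; rewrite linE lg ld; ring.
  move=> f; rewrite !inE negb_and negbK; case/orP => [/eqP ->|fX].
    rewrite /h; field; exact: dxn.
  by rewrite /h (sg f fX) (dX f fX); ring.
have [z zX zD] : exists2 z, z \in Xs & z \notin D.
  move: pD; rewrite properEneq => /andP [neq _].
  case: (boolP (Xs \subset D)) => [sXD|/subsetPn [z zX zD]]; last by exists z.
  by move: neq; rewrite eqEsubset sDX sXD.
exists z; rewrite /h (sd z zD) mulr0 addr0 mul1r; exact: fg.
Qed.

Lemma half (S C : {set A}) e g :
  depc (e |: S) g -> (forall f, f \in e |: S -> g f != 0) -> e \notin S ->
  mdep C -> S \proper C -> mdep (e |: S).
Proof.
move=> dg fg eS [_ mC] pS; split.
  exists g; split=> //; exists e; apply: fg; exact: setU11.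
move=> D pD dD.
have := elimA dg fg pD dD (setU11 e S).
have -> : (e |: S) :\ e = S.
  apply/setP => f; rewrite !inE; case: (eqVneq f e) => [->|] //=.
  by rewrite (negbTE eS).
exact: mC.
Qed.


Section Glue.
Variables (E1 E2 : {set A}) (e : A).
Hypothesis E12 : E1 :&: E2 = [set e].
Hypothesis re_nz : exists x, r e x != 0.
Hypothesis key : forall c1 c2,
  (forall f, f \notin E1 -> c1 f = 0) -> (forall f, f \notin E2 -> c2 f = 0) ->
  (forall x, lin c1 x = lin c2 x) -> exists l, forall x, lin c1 x = l * r e x.

Lemma inter_e f : f \in E1 -> f \in E2 -> f = e.
Proof. by move=> h1 h2; apply/set1P; rewrite -E12 inE h1 h2. Qed.

Lemma eE1 : e \in E1.
Proof. by have := set11 e; rewrite -E12 inE => /andP []. Qed.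
Lemma eE2 : e \in E2.
Proof. by have := set11 e; rewrite -E12 inE => /andP []. Qed.

Lemma nz_in (F : {set A}) (c : A -> R) f : (forall g, g \notin F -> c g = 0) -> c f != 0 -> f \in F.
Proof. move=> s nz; case: (boolP (f \in F)) => // fF; by rewrite s ?eqxx in nz. Qed.

Lemma full_dep (C : {set A}) : mdep C -> exists c, depc C c /\ forall f, f \in C -> c f != 0.
Proof.
move=> mC; have [[c [dc [f0 nf0]]] _] := mC.
exists c; split=> //; case: (full mC dc) => // h; by rewrite h eqxx in nf0.
Qed.

Lemma circ_other (C : {set A}) : mdep C -> e \in C -> exists2 f, f \in C & f != e.
Proof.
move=> mC eC; have [c [[s l] fc]] := full_dep mC.
case: (boolP [exists f, (f \in C) && (f != e)]) => [/existsP [f /andP [fC fe]]|]; first by exists f.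
rewrite negb_exists => /forallP h.
have [x0 nx0] := re_nz.
have := l x0; rewrite (@lin_ext c (fun f => if f == e then c e else 0)).
  rewrite lin_delta => /eqP; rewrite mulf_eq0 (negbTE nx0) orbF => /eqP ce.
  by have := fc e eC; rewrite ce eqxx.
move=> f; case: (eqVneq f e) => [-> //|fe].
apply: s; apply/negP => fC; by have := h f; rewrite fC fe.
Qed.

Lemma glue (C1 C2 : {set A}) : circ E1 C1 -> e \in C1 -> circ E2 C2 -> e \in C2 ->
  mdep ((C1 :|: C2) :\ e).
Proof.
move=> [sC1 mC1] eC1 [sC2 mC2] eC2.
have [c1 [[s1 l1] fc1]] := full_dep mC1.
have [c2 [[s2 l2] fc2]] := full_dep mC2.
have c1e := fc1 e eC1; have c2e := fc2 e eC2.
have [f1 f1C1 f1e] := circ_other mC1 eC1.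
have f1C2 : f1 \notin C2.
  apply/negP => f1C2; have := inter_e (subsetP sC1 _ f1C1) (subsetP sC2 _ f1C2).
  by move/eqP; rewrite (negbTE f1e).
split.
  pose g := fun f => (c1 e)^-1 * c1 f + (-(c2 e)^-1) * c2 f.
  exists g; split.
    split; last by move=> x; rewrite linE l1 l2; ring.
    move=> f; rewrite !inE negb_and negbK negb_or; case: (eqVneq f e) => [->|] /= _.
      by rewrite /g mulVf // mulNr mulVf // subrr.
    by rewrite /g; case/andP => /s1 -> /s2 ->; rewrite !mulr0 addr0.
  by exists f1; rewrite /g (s2 _ f1C2) mulr0 addr0 mulf_neq0 ?invr_eq0 ?fc1.
move=> C' pC' [c' [[s' l'] [f0 nf0]]].
have sC' := proper_sub pC'.
have C'sub : forall f, f \in C' -> [&& f != e & (f \in C1) || (f \in C2)].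
  by move=> f fC; have := subsetP sC' f fC; rewrite !inE.
have c'e : c' e = 0.
  apply: s'; apply/negP => /C'sub; by rewrite eqxx.
pose a := fun f => if f \in E1 then c' f else 0.
pose b := fun f => if f \in E1 then 0 else c' f.
have lab : forall x, lin a x + lin b x = 0.
  move=> x; rewrite -[lin a x]mul1r -[lin b x]mul1r -linE -(l' x).
  by apply: lin_ext => f; rewrite /a /b; case: ifP => _; ring.
have [l hl] : exists l, forall x, lin a x = l * r e x.
  apply: (key (c2 := fun f => (-1) * b f + 0 * b f)).
  - by move=> f fE; rewrite /a (negbTE fE).
  - move=> f fE; rewrite /b; case: ifP => fE1; first by ring.
    suff -> : c' f = 0 by ring.
    apply: s'; apply/negP => /C'sub /andP [_ /orP [] fC].
      by rewrite (subsetP sC1 _ fC) in fE1.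
    by rewrite (subsetP sC2 _ fC) in fE.
  - move=> x; rewrite linE; have /eqP := lab x; rewrite addr_eq0 => /eqP ->; ring.
pose dl := fun f => if f == e then l else 0.
pose a' := fun f => 1 * a f + (-1) * dl f.
pose b' := fun f => 1 * b f + 1 * dl f.
have da' : depc C1 a'.
  split; last by move=> x; rewrite linE lin_delta hl; ring.
  move=> f fC1; have fe : f != e by apply/negP => /eqP fe; rewrite fe eC1 in fC1.
  rewrite /a' /dl (negbTE fe) /a; case: ifP => fE1; last by ring.
  suff -> : c' f = 0 by ring.
  apply: s'; apply/negP => /C'sub /andP [_ /orP [] fC]; first by rewrite fC in fC1.
  by move/eqP: (inter_e fE1 (subsetP sC2 _ fC)); rewrite (negbTE fe).
have db' : depc C2 b'.
  split; last first.
    move=> x; rewrite linE lin_delta; have /eqP := lab x; rewrite addrC addr_eq0 => /eqP ->.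
    rewrite hl; ring.
  move=> f fC2; have fe : f != e by apply/negP => /eqP fe; rewrite fe eC2 in fC2.
  rewrite /b' /dl (negbTE fe) /b; case: ifP => fE1; first by ring.
  suff -> : c' f = 0 by ring.
  apply: s'; apply/negP => /C'sub /andP [_ /orP [] fC]; last by rewrite fC in fC2.
  by rewrite (subsetP sC1 _ fC) in fE1.
have a'e : a' e = - l by rewrite /a' /dl /a eqxx eE1 c'e; ring.
have b'e : b' e = l by rewrite /b' /dl /b eqxx eE1; ring.
have [l0|ln0] := eqVneq l 0.
  have za : forall f, a' f = 0.
    case: (full mC1 da') => // h; by have := h e eC1; rewrite a'e l0 oppr0 eqxx.
  have zb : forall f, b' f = 0.
    case: (full mC2 db') => // h; by have := h e eC2; rewrite b'e l0 eqxx.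
  move: nf0; suff -> : c' f0 = 0 by rewrite eqxx.
  have := za f0; have := zb f0; rewrite /a' /b' /dl /a /b l0.
  rewrite if_same !mulr0 !addr0 !mul1r.
  by case: ifP => _ h1 h2; rewrite ?h1 ?h2.
have fa : forall f, f \in C1 -> a' f != 0.
  case: (full mC1 da') => // h; by have := h e; rewrite a'e => /eqP; rewrite oppr_eq0 (negbTE ln0).
have fb : forall f, f \in C2 -> b' f != 0.
  case: (full mC2 db') => // h; by have := h e; rewrite b'e => /eqP; rewrite (negbTE ln0).
move: pC'; rewrite properE => /andP [_ /negP]; apply.
apply/subsetP => f; rewrite !inE => /andP [fe /orP [] fC].
  have := fa f fC; rewrite /a' /dl (negbTE fe) /a; case: ifP => _.
    rewrite mulr0 addr0 mul1r; exact: nz_in.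
  by rewrite !mulr0 addr0 eqxx.
have := fb f fC; rewrite /b' /dl (negbTE fe) /b; case: ifP => _.
  by rewrite !mulr0 addr0 eqxx.
rewrite mulr0 addr0 mul1r; exact: nz_in.
Qed.


Lemma properX (B D : {set A}) x : D \subset B -> x \in B -> x \notin D -> D \proper B.
Proof. by move=> sDB xB xD; apply/properP; split=> //; exists x. Qed.

Lemma splitC (C : {set A}) : mdep C -> C \subset E1 :|: E2 -> ~~ (C \subset E1) ->
  ~~ (C \subset E2) -> e \notin C /\ exists C1 C2,
  [/\ circ E1 C1, e \in C1, circ E2 C2, e \in C2 & C = (C1 :|: C2) :\ e].
Proof.
move=> mC sC /subsetPn [f2 f2C f2E1] /subsetPn [f1 f1C f1E2].
have [c [[s l] fc]] := full_dep mC.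
have inU : forall f, f \in C -> (f \in E1) || (f \in E2).
  by move=> f fC; have := subsetP sC f fC; rewrite inE.
have f1E1 : f1 \in E1 by have := inU f1 f1C; rewrite (negbTE f1E2) orbF.
have f2E2 : f2 \in E2 by have := inU f2 f2C; rewrite (negbTE f2E1).
have f1e : f1 != e by apply/negP => /eqP h; rewrite h eE2 in f1E2.
have f2e : f2 != e by apply/negP => /eqP h; rewrite h eE1 in f2E1.
pose a := fun f => if (f \in E1) && (f != e) then c f else 0.
pose b := fun f => 1 * c f + (-1) * a f.
have lb : forall x, lin b x = - lin a x by move=> x; rewrite linE l; ring.
have [l0 hl] : exists l, forall x, lin a x = l * r e x.
  apply: (key (c2 := fun f => (-1) * b f + 0 * b f)).
  - by move=> f fE; rewrite /a (negbTE fE).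
  - move=> f fE; have fe : f != e by apply/negP => /eqP h; rewrite h eE2 in fE.
    rewrite /b /a fe andbT; case: ifP => fE1; first by ring.
    suff -> : c f = 0 by ring.
    apply: s; apply/negP => fC; by have := inU f fC; rewrite fE1 (negbTE fE).
  - by move=> x; rewrite linE lb; ring.
pose dl := fun f => if f == e then l0 else 0.
pose a' := fun f => 1 * a f + (-1) * dl f.
pose b' := fun f => 1 * b f + 1 * dl f.
have la' : forall x, lin a' x = 0 by move=> x; rewrite linE lin_delta hl; ring.
have lb' : forall x, lin b' x = 0 by move=> x; rewrite linE lin_delta lb hl; ring.
have sa' : forall f, f \notin e |: (C :&: E1) -> a' f = 0.
  move=> f; rewrite !inE negb_or negb_and => /andP [fe fCE].
  rewrite /a' /dl (negbTE fe) /a fe andbT; case: ifP => fE1; last by ring.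
  rewrite fE1 orbF in fCE; by rewrite (s f fCE); ring.
have a'f1 : a' f1 = c f1.
  by rewrite /a' /dl (negbTE f1e) /a f1E1 f1e /=; ring.
have eC : e \notin C.
  apply/negP => eC; apply: (mC.2 (e |: (C :&: E1))).
    apply: (@properX _ _ f2).
    - by apply/subsetP => f; rewrite !inE => /orP [/eqP -> //| /andP []].
    - done.
    - by rewrite !inE negb_or f2e (negbTE f2E1) andbF.
  exists a'; split; first by split.
  by exists f1; rewrite a'f1 fc.
have S1p : C :&: E1 \proper C.
  apply: (@properX _ _ f2); [exact: subsetIl | done | by rewrite inE (negbTE f2E1) andbF].
have S2p : C :&: E2 \proper C.
  apply: (@properX _ _ f1); [exact: subsetIl | done | by rewrite inE (negbTE f1E2) andbF].
have ln0 : l0 != 0.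
  apply/negP => /eqP l00; apply: (mC.2 _ S1p); exists a; split; last first.
    by exists f1; rewrite /a f1E1 f1e fc.
  split; last by move=> x; rewrite hl l00 mul0r.
  move=> f; rewrite inE negb_and => fCE; rewrite /a; case: ifP => // /andP [fE1 _].
  rewrite fE1 orbF in fCE; exact: s.
have ce : c e = 0 by apply: s.
split=> //.
have eS1 : e \notin C :&: E1 by rewrite inE (negbTE eC).
have eS2 : e \notin C :&: E2 by rewrite inE (negbTE eC).
have m1 : mdep (e |: (C :&: E1)).
  apply: (half (g := a') _ _ eS1 mC S1p); first by split.
  move=> f; rewrite !inE => /orP [/eqP ->|/andP [fC fE1]].
    by rewrite /a' /dl /a eqxx andbF !mulr0 add0r mulN1r oppr_eq0.
  have fe : f != e by apply/negP => /eqP h; rewrite h (negbTE eC) in fC.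
  by rewrite /a' /dl (negbTE fe) /a fE1 fe /= mulr0 addr0 mul1r fc.
have m2 : mdep (e |: (C :&: E2)).
  apply: (half (g := b') _ _ eS2 mC S2p).
    split=> // f; rewrite !inE negb_or negb_and => /andP [fe fCE].
    rewrite /b' /b /dl (negbTE fe) /a fe andbT; case: (boolP (f \in C)) => fC.
      rewrite fC /= in fCE; have := inU f fC; rewrite (negbTE fCE) orbF => ->; ring.
    rewrite (s f fC); case: ifP => _; ring.
  move=> f; rewrite !inE => /orP [/eqP ->|/andP [fC fE2]].
    rewrite /b' /b /dl /a eqxx andbF ce; set z := (X in X != 0).
    by have -> : z = l0 by rewrite /z; ring.
  have fe : f != e by apply/negP => /eqP h; rewrite h (negbTE eC) in fC.
  have fE1 : f \notin E1 by apply/negP => fE1; move/eqP: (inter_e fE1 fE2); rewrite (negbTE fe).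
  rewrite /b' /b /dl (negbTE fe) /a (negbTE fE1) /=; set z := (X in X != 0).
  have -> : z = c f by rewrite /z; ring.
  exact: fc.
exists (e |: (C :&: E1)), (e |: (C :&: E2)); split.
- split=> //; apply/subsetP => f; rewrite !inE => /orP [/eqP ->|/andP [_ ->] //]; exact: eE1.
- exact: setU11.
- split=> //; apply/subsetP => f; rewrite !inE => /orP [/eqP ->|/andP [_ ->] //]; exact: eE2.
- exact: setU11.
apply/setP => f; rewrite !inE; case: (eqVneq f e) => [->|fe] /=; first exact/negbTE.
by case: (boolP (f \in C)) => /= fC; rewrite ?(inU f fC).
Qed.

Lemma main_abs :
  (forall C, circ (E1 :|: E2) C <->
     parallel_connection_circuits (circ E1) (circ E2) e C) /\
  (forall C, circ ((E1 :|: E2) :\ e) C <->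
     two_sum_circuits (circ E1) (circ E2) e C).
Proof.
have P1 : forall C, circ (E1 :|: E2) C <->
     parallel_connection_circuits (circ E1) (circ E2) e C.
  move=> C; split.
    move=> [sC mC]; rewrite /parallel_connection_circuits.
    case: (boolP (C \subset E1)) => s1; first by left.
    case: (boolP (C \subset E2)) => s2; first by right; left.
    right; right; have [_ [C1 [C2 H]]] := splitC mC sC s1 s2; by exists C1, C2.
  case=> [[s m]|[[s m]|[C1 [C2 [c1 e1 c2 e2 ->]]]]].
  - by split=> //; apply: (subset_trans s); exact: subsetUl.
  - by split=> //; apply: (subset_trans s); exact: subsetUr.
  - split; last exact: glue.
    case: c1 c2 => s1 _ [s2 _]; apply/subsetP => f; rewrite !inE => /andP [_ /orP [] h].
      by rewrite (subsetP s1 f h).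
    by rewrite (subsetP s2 f h) orbT.
split=> // C; split.
  move=> [sC mC].
  have eC : e \notin C by apply/negP => eC; have := subsetP sC e eC; rewrite !inE eqxx.
  have : circ (E1 :|: E2) C.
    by split=> //; apply: (subset_trans sC); exact: subsetDl.
  move/P1; case=> [h|[h|h]]; [left; split=> //; by left | left; split=> //; by right | by right].
case=> [[h eC]|h].
  have [sC mC] : circ (E1 :|: E2) C by apply/P1; case: h; [left | right; left].
  split=> //; apply/subsetP => f fC; rewrite in_setD1 (subsetP sC f fC) andbT.
  by apply/negP => /eqP fe; rewrite -fe fC in eC.
have [sC mC] : circ (E1 :|: E2) C by apply/P1; right; right.
split=> //; apply/subsetP => f fC; rewrite in_setD1 (subsetP sC f fC) andbT.
have eC : e \notin C by case: h => C1 [C2 [_ _ _ _ ->]]; rewrite !inE eqxx.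
by apply/negP => /eqP fe; rewrite -fe fC in eC.
Qed.

End Glue.
End Abstract.

Lemma gen_neq (R : realType) (T : finType) (d : nat) (p : T -> 'I_d -> R) (V : {set T}) u v (k0 : 'I_d) :
  generic_on V p -> u \in V -> v \in V -> u != v -> p u k0 != p v k0.
Proof.
move=> gen uV vV uv.
pose c := fun i : 'I_2 => if i == ord0 then (u, k0) else (v, k0).
have ci : injective c.
  move=> i j; rewrite /c; case: (i =P ord0) => [->|/eqP i0]; case: (j =P ord0) => [->|/eqP j0] //.
  - by case=> /eqP; rewrite (negbTE uv).
  - by case=> /esym/eqP; rewrite (negbTE uv).
  - move=> _; apply/val_inj; move: i j i0 j0 => [[|[|i]] Hi] [[|[|j]] Hj] //.
have cV : forall k, (c k).1 \in V by move=> k; rewrite /c; case: ifP.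
pose q : {mpoly rat[2]} := 'X_ord0 - 'X_(lift ord0 ord0).
have q0 : q != 0.
  apply/negP => /eqP q0.
  have := congr1 (meval (fun i : 'I_2 => if i == ord0 then 1 else 0 : rat)) q0.
  by rewrite /q mevalB !mevalXU meval0 /=.
have := gen 2 c ci cV q q0.
rewrite /q raddfB /= /map_mpoly !mmapX !mmap1_id mevalB !mevalXU /c /=.
by rewrite subr_eq0.
Qed.

Section Geo.
Variables (R : realType) (T : finType) (d : nat) (p : T -> 'I_d -> R).

Definition rr (f : {set T}) (x : T * 'I_d) := rig_row p f x.1 x.2.

Lemma row_out (f : {set T}) x k : x \notin f -> rig_row p f x k = 0.
Proof. by rewrite /rig_row => /negbTE ->. Qed.

Lemma row_a a b k : a != b -> rig_row p [set a; b] a k = p a k - p b k.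
Proof.
move=> ab; rewrite /rig_row setU11 big_setU1 ?big_set1 /= ?subrr ?add0r // inE eq_sym.
by rewrite eq_sym.
Qed.

Lemma row_b a b k : a != b -> rig_row p [set a; b] b k = p b k - p a k.
Proof.
move=> ab; rewrite /rig_row !inE eqxx orbT big_setU1 ?big_set1 ?inE /= ?subrr ?addr0 //.
Qed.

Definition triv (m : T -> 'I_d -> R) :=
  forall a b, \sum_k (p a k - p b k) * (m a k - m b k) = 0.

Lemma edge_phi a b m : a != b -> triv m ->
  \sum_x \sum_k rig_row p [set a; b] x k * m x k = 0.
Proof.
move=> ab tm; rewrite (bigD1 a) // (bigD1 b) /=; last by rewrite eq_sym.
rewrite [X in _ + (_ + X)]big1 ?addr0; last first.
  move=> x /andP [xa xb]; apply: big1 => k _; rewrite row_out ?mul0r //.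
  by rewrite !inE negb_or xa xb.
rewrite -big_split /= -[RHS](tm a b); apply: eq_bigr => k _.
rewrite row_a // row_b //; ring.
Qed.

Lemma phi_lin (E : {set {set T}}) (V : {set T}) (c : {set T} -> R) m :
  is_graph V E -> (forall f, f \notin E -> c f = 0) -> triv m ->
  \sum_x \sum_k lin rr c (x, k) * m x k = 0.
Proof.
move=> gE sc tm.
have -> : \sum_x \sum_k lin rr c (x, k) * m x k =
          \sum_f c f * \sum_x \sum_k rig_row p f x k * m x k.
  rewrite /lin /rr /=.
  under eq_bigr => x _ do under eq_bigr => k _ do rewrite mulr_suml.
  under eq_bigr => x _ do rewrite exchange_big /=.
  rewrite exchange_big /=; apply: eq_bigr => f _.
  rewrite mulr_sumr; apply: eq_bigr => x _; rewrite mulr_sumr; apply: eq_bigr => k _.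
  by rewrite mulrA.
apply: big1 => f _; case: (boolP (f \in E)) => fE; last by rewrite sc ?mul0r.
have [_ /eqP/cards2P [a [b [ab ->]]]] := gE f fE.
by rewrite edge_phi ?mulr0.
Qed.


Lemma lin_off (V : {set T}) E (c : {set T} -> R) x k :
  is_graph V E -> (forall f, f \notin E -> c f = 0) -> x \notin V -> lin rr c (x, k) = 0.
Proof.
move=> gE sc xV; apply: big1 => f _; case: (boolP (f \in E)) => fE; last by rewrite sc ?mul0r.
have [/subsetP sf _] := gE f fE; rewrite /rr /= row_out ?mulr0 //.
by apply/negP => /sf; apply/negP.
Qed.

Definition dot (a b : 'I_d -> R) := \sum_k a k * b k.

Lemma dotC a b : dot a b = dot b a.
Proof. by apply: eq_bigr => k _; rewrite mulrC. Qed.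

Lemma sum_lin (x y z : 'I_d -> R) s t :
  \sum_k x k * (s * y k - t * z k) = s * dot x y - t * dot x z.
Proof. rewrite /dot !mulr_sumr -sumrB; apply: eq_bigr => k _; ring. Qed.

Lemma dotB a (b c : 'I_d -> R) : dot a b - dot a c = dot a (fun k => b k - c k).
Proof. rewrite /dot -sumrB; apply: eq_bigr => k _; ring. Qed.

Lemma triv_tr j : triv (fun _ k => if k == j then 1 else 0).
Proof. by move=> a b; apply: big1 => k _; rewrite subrr mulr0. Qed.

Definition rot (al be : 'I_d -> R) x k := dot al (p x) * be k - dot be (p x) * al k.

Lemma rot_diff al be a b k :
  rot al be a k - rot al be b k =
  dot al (fun k => p a k - p b k) * be k - dot be (fun k => p a k - p b k) * al k.
Proof. rewrite /rot -!dotB; ring. Qed.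

Lemma triv_rot al be : triv (rot al be).
Proof.
move=> a b; under eq_bigr => k _ do rewrite rot_diff.
rewrite sum_lin [dot (fun k => _) be]dotC [dot (fun k => _) al]dotC; ring.
Qed.


Lemma key_geo (V1 V2 : {set T}) E1 E2 u v :
  is_graph V1 E1 -> is_graph V2 E2 -> V1 :&: V2 = [set u; v] -> u != v ->
  (exists k, p u k != p v k) ->
  forall c1 c2 : {set T} -> R,
  (forall f, f \notin E1 -> c1 f = 0) -> (forall f, f \notin E2 -> c2 f = 0) ->
  (forall x, lin rr c1 x = lin rr c2 x) ->
  exists l, forall x, lin rr c1 x = l * rr [set u; v] x.
Proof.
move=> g1 g2 V12 uv [k0 nk0] c1 c2 s1 s2 l12.
pose w := fun x k => lin rr c1 (x, k).
have woff : forall x k, x \notin [set u; v] -> w x k = 0.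
  move=> x k; rewrite -V12 inE negb_and => /orP [xV|xV].
    exact: (lin_off k g1 s1 xV).
  by rewrite /w l12; exact: (lin_off k g2 s2 xV).
have phi : forall m, triv m -> \sum_k (w u k * m u k + w v k * m v k) = 0.
  move=> m tm; have := phi_lin g1 s1 tm.
  rewrite (bigD1 u) // (bigD1 v) /=; last by rewrite eq_sym.
  rewrite [X in _ + (_ + X)]big1 ?addr0; last first.
    move=> x /andP [xu xv]; apply: big1 => k _; have := woff x k; rewrite /w => ->.
      by rewrite mul0r.
    by rewrite !inE negb_or xu xv.
  by rewrite -big_split.
have wv : forall j, w v j = - w u j.
  move=> j; have := phi _ (triv_tr j).
  rewrite (bigD1 j) //= eqxx big1 ?addr0; last first.
    by move=> k /negbTE ->; rewrite !mulr0 addr0.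
  by rewrite !mulr1 addrC => /eqP; rewrite addr_eq0 => /eqP.
pose W := w u.
pose D := fun k => p u k - p v k.
pose a := dot D D.
pose b := dot W D.
have rt : b * b - a * dot W W = 0.
  have := phi _ (triv_rot W D).
  have -> : \sum_k (w u k * rot W D u k + w v k * rot W D v k) =
            \sum_k W k * (b * D k - a * W k).
    apply: eq_bigr => k _; rewrite wv.
    have := rot_diff W D u v k; rewrite -/D -/b -/a /W => <-; ring.
  by rewrite sum_lin.
have sq : \sum_k (a * W k - b * D k) ^+ 2 = 0.
  have -> : \sum_k (a * W k - b * D k) ^+ 2 =
    \sum_k (a * (W k * (a * W k - b * D k)) + (- b) * (D k * (a * W k - b * D k))).
    by apply: eq_bigr => k _; ring.
  rewrite big_split /= -!mulr_sumr !sum_lin [dot D W]dotC -/b.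
  have -> : a * (a * dot W W - b * b) + - b * (a * b - b * a) =
            - a * (b * b - a * dot W W) by ring.
  by rewrite rt mulr0.
have eqk : forall k, a * W k = b * D k.
  move=> k; apply/eqP; rewrite -subr_eq0 -sqrf_eq0; apply/eqP.
  by apply: (psumr_eq0P _ sq) => // i _; exact: sqr_ge0.
have an0 : a != 0.
  apply/negP => /eqP a0.
  have h : D k0 * D k0 = 0.
    apply: (psumr_eq0P (P := predT) (F := fun k => D k * D k) _ a0) => // i _.
    by rewrite -expr2 sqr_ge0.
  move/eqP: h; rewrite mulf_eq0 orbb /D subr_eq0; exact/negP.
exists (b / a) => [[y k]].
rewrite /rr /=.
case: (eqVneq y u) => [->|yu].
  rewrite row_a //; apply: (mulfI an0); rewrite /D in eqk; rewrite -/(w u k) -/(W k) eqk.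
  field.
  exact: an0.
case: (eqVneq y v) => [->|yv].
  rewrite row_b //; apply: (mulfI an0); rewrite -/(w v k) wv.
  have := eqk k; rewrite /W /D => e1.
  rewrite mulrN e1; field; exact: an0.
rewrite row_out ?mulr0; last by rewrite !inE negb_or yu yv.
have := woff y k; rewrite /w => -> //; by rewrite !inE negb_or yu yv.
Qed.

End Geo.

Section Bridge.
Variables (R : realType) (T : finType) (d : nat) (p : T -> 'I_d -> R).

Lemma dep_eq (F : {set {set T}}) : rig_dependent p F <-> dep (rr p) F.
Proof.
split.
  move=> [c [[f fF cf] h]].
  exists (fun f => if f \in F then c f else 0); split; last by exists f; rewrite fF.
  split; first by move=> g /negbTE ->.
  move=> [w k]; rewrite -[RHS](h w k) [RHS]big_mkcond; apply: eq_bigr => g _.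
  by rewrite /rr /=; case: ifP => _ //; rewrite mul0r.
move=> [c [[s l] [f cf]]]; exists c; split.
  by exists f => //; exact: nz_in cf.
move=> w k; rewrite -[RHS](l (w, k)) big_mkcond; apply: eq_bigr => g _.
by rewrite /rr /=; case: ifP => // gF; rewrite s ?gF // mul0r.
Qed.

Lemma circ_eq (E : {set {set T}}) : rig_circuit p E = circ (rr p) E.
Proof.
apply: functional_extensionality => C; apply: propositional_extensionality.
rewrite /rig_circuit /circ /mdep; split.
  move=> [s [dC m]]; split=> //; split; first exact/dep_eq.
  by move=> C' pC' /dep_eq; apply: m.
move=> [s [dC m]]; split=> //; split; first exact/dep_eq.
by move=> C' pC' /dep_eq; apply: m.
Qed.

End Bridge.

Theorem theorem3p3 (R : realType) (T : finType) (d : nat) (p : T -> 'I_d -> R)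
    (V1 V2 : {set T}) (E1 E2 : {set {set T}}) (e : {set T}) :
  (0 < d)%N ->
  is_graph V1 E1 -> is_graph V2 E2 ->
  #|V1 :&: V2| = 2%N ->
  E1 :&: E2 = [set e] ->
  generic_on (V1 :|: V2) p ->
  ~ is_coloop (rig_circuit p E1) e ->
  ~ is_coloop (rig_circuit p E2) e ->
  (forall C, rig_circuit p (E1 :|: E2) C <->
     parallel_connection_circuits (rig_circuit p E1) (rig_circuit p E2) e C) /\
  (forall C, rig_circuit p ((E1 :|: E2) :\ e) C <->
     two_sum_circuits (rig_circuit p E1) (rig_circuit p E2) e C).
Proof.
move=> d0 g1 g2 c12 E12 gen _ _.
rewrite !circ_eq.
have eE1 : e \in E1 by have := set11 e; rewrite -E12 inE => /andP [].
have eE2 : e \in E2 by have := set11 e; rewrite -E12 inE => /andP [].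
have [sub1 ce] := g1 e eE1.
have [sub2 _] := g2 e eE2.
have eV : e = V1 :&: V2.
  by apply/eqP; rewrite eqEcard subsetI sub1 sub2 c12 ce leqnn.
have /cards2P [u [v [uv ev]]] : #|e| == 2%N by rewrite ce.
have V12 : V1 :&: V2 = [set u; v] by rewrite -eV.
have uV : u \in V1 :|: V2 by rewrite inE (subsetP sub1) // ev !inE eqxx.
have vV : v \in V1 :|: V2 by rewrite inE (subsetP sub1) // ev !inE eqxx orbT.
pose k0 := Ordinal d0.
have nk0 := gen_neq k0 gen uV vV uv.
have key := key_geo g1 g2 V12 uv (ex_intro _ k0 nk0).
rewrite ev in E12 key *.
have re_nz : exists x, rr p [set u; v] x != 0.
  by exists (u, k0); rewrite /rr /= row_a // subr_eq0.
exact: (main_abs E12 re_nz key).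
Qed.
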